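(* Let $(\mathcal{C},\mathbb{E},\mathfrak{s})$ be an extriangulated category. Then $\mathfrak{s}\textup{-tri}(\mathcal{C})/\mathcal{R}_2$ is an abelian category.
   Context: An extriangulated category $(\mathcal{C},\mathbb{E},\mathfrak{s})$ (Nakaoka–Palu) is an additive category with an additive bifunctor $\mathbb{E}:\mathcal{C}^{\mathrm{op}}\times\mathcal{C}\to Ab$ and a realization $\mathfrak{s}$ assigning to each $\delta\in\mathbb{E}(C,A)$ an equivalence class of sequences $A\to B\to C$, giving $\mathfrak{s}$-triangles $A\to B\to C\overset{\delta}{\dashrightarrow}$, satisfying axioms (ET1)–(ET4)$^{\mathrm{op}}$. $\mathfrak{s}\textup{-tri}(\mathcal{C})$ has as objects the $\mathfrak{s}$-triangles $X_\bullet=(X_1\xrightarrow{f_1}X_2\xrightarrow{f_2}X_3\overset{\delta}{\dashrightarrow})$ and as morphisms $X_\bullet\to Y_\bullet=(Y_1\xrightarrow{g_1}Y_2\xrightarrow{g_2}Y_3\overset{\delta'}{\dashrightarrow})$ the triples $(\varphi_1,\varphi_2,\varphi_3)$ with $\varphi_2f_1=g_1\varphi_1$, $\varphi_3f_2=g_2\varphi_2$ and $\mathbb{E}(X_3,\varphi_1)(\delta)=\mathbb{E}(\varphi_3,Y_1)(\delta')$. $\mathcal{R}_2$ is the ideal of morphisms $\varphi_\bullet$ such that $\varphi_3$ factors through $g_2$. *)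

(* Defs.v *)
From HB Require Import structures.
From mathcomp Require Import all_boot all_algebra.
Set Implicit Arguments. Unset Strict Implicit. Unset Printing Implicit Defensive.
Import GRing.Theory.
Local Open Scope ring_scope.

(* comp g f = g o f.  The laws are stated separately (is_preadditive).       *)
Record preadd := PreAdd {
  obj : Type;
  hom : obj -> obj -> zmodType;
  idm : forall A, hom A A;
  comp : forall A B C, hom B C -> hom A B -> hom A C }.
Arguments hom {p}.
Arguments idm {p} A.
Arguments comp {p A B C}.

Section Additive.
Variable C : preadd.

Definition is_iso (A B : obj C) (f : hom A B) :=
  exists g : hom B A, comp g f = idm A /\ comp f g = idm B.

Definition is_zero_object (Z : obj C) :=
  forall A : obj C, (forall f g : hom A Z, f = g) /\ (forall f g : hom Z A, f = g).

Definition is_biproduct (A1 A2 S : obj C) (i1 : hom A1 S) (i2 : hom A2 S)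
    (p1 : hom S A1) (p2 : hom S A2) :=
  [/\ comp p1 i1 = idm A1, comp p2 i2 = idm A2, comp p1 i2 = 0, comp p2 i1 = 0
    & comp i1 p1 + comp i2 p2 = idm S].

Definition is_preadditive :=
  [/\ (forall (A B D F : obj C) (h : hom D F) (g : hom B D) (f : hom A B),
         comp h (comp g f) = comp (comp h g) f),
      (forall (A B : obj C) (f : hom A B), comp (idm B) f = f),
      (forall (A B : obj C) (f : hom A B), comp f (idm A) = f),
      (forall (A B D : obj C) (g1 g2 : hom B D) (f : hom A B),
         comp (g1 + g2) f = comp g1 f + comp g2 f)
    & (forall (A B D : obj C) (g : hom B D) (f1 f2 : hom A B),
         comp g (f1 + f2) = comp g f1 + comp g f2)].

Definition is_additive :=
  [/\ is_preadditive,
      exists Z, is_zero_object Z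
    & forall A1 A2 : obj C, exists (S : obj C) (i1 : hom A1 S) (i2 : hom A2 S)
        (p1 : hom S A1) (p2 : hom S A2), is_biproduct i1 i2 p1 p2].
End Additive.

(* Ext X A = E(X, A);  Emap c a = E(c, a) : E(X, A) -> E(X', A')             *)
(*   for c : X' -> X and a : A -> A'.                                        *)
(* realizes d B x y  <->  the sequence A -x-> B -y-> X belongs to the        *)
(*   equivalence class s(d), for d in E(X, A).                               *)
Record ext_data (C : preadd) := ExtData {
  Ext : obj C -> obj C -> zmodType;
  Emap : forall X X' A A' : obj C, hom X' X -> hom A A' -> Ext X A -> Ext X' A';
  realizes : forall (A X : obj C), Ext X A -> forall B : obj C, hom A B -> hom B X -> Prop }.
Arguments Ext {C} e.
Arguments Emap {C} e {X X' A A'}.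
Arguments realizes {C} e {A X} _ B.

Section Extriangulated.
Variables (C : preadd) (E : ext_data C).

Definition push (X A A' : obj C) (a : hom A A') (d : Ext E X A) : Ext E X A' :=
  Emap E (idm X) a d.
Definition pull (X X' A : obj C) (c : hom X' X) (d : Ext E X A) : Ext E X' A :=
  Emap E c (idm A) d.

Definition E_additive_bifunctor :=
  [/\ (forall (X A : obj C) (d : Ext E X A), Emap E (idm X) (idm A) d = d),
      (forall (X X' X'' A A' A'' : obj C) (c : hom X' X) (c' : hom X'' X')
          (a : hom A A') (a' : hom A' A'') (d : Ext E X A),
         Emap E (comp c c') (comp a' a) d = Emap E c' a' (Emap E c a d)),
      (forall (X X' A A' : obj C) (c : hom X' X) (a : hom A A') (d1 d2 : Ext E X A),
         Emap E c a (d1 + d2) = Emap E c a d1 + Emap E c a d2),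
      (forall (X X' A : obj C) (c1 c2 : hom X' X) (d : Ext E X A),
         pull (c1 + c2) d = pull c1 d + pull c2 d)
    & (forall (X A A' : obj C) (a1 a2 : hom A A') (d : Ext E X A),
         push (a1 + a2) d = push a1 d + push a2 d)].

Definition seq_equiv (A X B B' : obj C) (x : hom A B) (y : hom B X)
    (x' : hom A B') (y' : hom B' X) :=
  exists b : hom B B', [/\ is_iso b, comp b x = x' & comp y' b = y].

Definition realization_is_class :=
  forall (A X : obj C) (d : Ext E X A),
    (exists (B : obj C) (x : hom A B) (y : hom B X), realizes E d B x y) /\
    (forall (B B' : obj C) (x : hom A B) (y : hom B X) (x' : hom A B') (y' : hom B' X),
       realizes E d B x y -> (realizes E d B' x' y' <-> seq_equiv x y x' y')).

Definition realization_condition :=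
  forall (A X A' X' B B' : obj C) (d : Ext E X A) (d' : Ext E X' A')
    (x : hom A B) (y : hom B X) (x' : hom A' B') (y' : hom B' X')
    (a : hom A A') (c : hom X X'),
    realizes E d B x y -> realizes E d' B' x' y' -> push a d = pull c d' ->
    exists b : hom B B', comp b x = comp x' a /\ comp y' b = comp c y.

Definition additive_realization :=
  (forall (A X S : obj C) (iA : hom A S) (iX : hom X S) (pA : hom S A) (pX : hom S X),
     is_biproduct iA iX pA pX -> realizes E (0 : Ext E X A) S iA pX) /\
  (forall (A X A' X' B B' SA SB SX : obj C) (d : Ext E X A) (d' : Ext E X' A')
     (x : hom A B) (y : hom B X) (x' : hom A' B') (y' : hom B' X')
     (iA : hom A SA) (iA' : hom A' SA) (pA : hom SA A) (pA' : hom SA A')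
     (iB : hom B SB) (iB' : hom B' SB) (pB : hom SB B) (pB' : hom SB B')
     (iX : hom X SX) (iX' : hom X' SX) (pX : hom SX X) (pX' : hom SX X'),
     realizes E d B x y -> realizes E d' B' x' y' ->
     is_biproduct iA iA' pA pA' -> is_biproduct iB iB' pB pB' ->
     is_biproduct iX iX' pX pX' ->
     realizes E (push iA (pull pX d) + push iA' (pull pX' d')) SB
       (comp iB (comp x pA) + comp iB' (comp x' pA'))
       (comp iX (comp y pB) + comp iX' (comp y' pB'))).

Definition ET3 :=
  forall (A X A' X' B B' : obj C) (d : Ext E X A) (d' : Ext E X' A')
    (x : hom A B) (y : hom B X) (x' : hom A' B') (y' : hom B' X')
    (a : hom A A') (b : hom B B'),
    realizes E d B x y -> realizes E d' B' x' y' -> comp b x = comp x' a ->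
    exists c : hom X X', comp c y = comp y' b /\ push a d = pull c d'.

Definition ET3op :=
  forall (A X A' X' B B' : obj C) (d : Ext E X A) (d' : Ext E X' A')
    (x : hom A B) (y : hom B X) (x' : hom A' B') (y' : hom B' X')
    (b : hom B B') (c : hom X X'),
    realizes E d B x y -> realizes E d' B' x' y' -> comp y' b = comp c y ->
    exists a : hom A A', comp x' a = comp b x /\ push a d = pull c d'.

Definition ET4 :=
  forall (A B D F Cc : obj C) (d : Ext E D A) (d' : Ext E F B)
    (f : hom A B) (f' : hom B D) (g : hom B Cc) (g' : hom Cc F),
    realizes E d B f f' -> realizes E d' Cc g g' ->
    exists (Eo : obj C) (h : hom A Cc) (h' : hom Cc Eo) (dd : hom D Eo)
      (e : hom Eo F) (d'' : Ext E Eo A),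
      [/\ comp g f = h, comp h' g = comp dd f', comp e h' = g',
          realizes E d'' Cc h h'
        & [/\ realizes E (push f' d') Eo dd e, pull dd d'' = d
            & push f d'' = pull e d']].

Definition ET4op :=
  forall (D A B F Cc : obj C) (d : Ext E B D) (d' : Ext E Cc F)
    (f' : hom D A) (f : hom A B) (g' : hom F B) (g : hom B Cc),
    realizes E d A f' f -> realizes E d' B g' g ->
    exists (Eo : obj C) (dd : hom D Eo) (e : hom Eo F) (h' : hom Eo A)
      (h : hom A Cc) (d'' : Ext E Cc Eo),
      [/\ comp h' dd = f', comp f h' = comp g' e, comp g f = h,
          realizes E d'' A h' h
        & [/\ realizes E (pull g' d) Eo dd e, push e d'' = d'
            & push dd d = pull g d'']].

Definition extriangulated :=
  [/\ is_additive C, E_additive_bifunctor,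
      realization_is_class /\ realization_condition /\ additive_realization,
      ET3 /\ ET3op
    & ET4 /\ ET4op].

Record stri := STri {
  s1 : obj C; s2 : obj C; s3 : obj C;
  sf1 : hom s1 s2; sf2 : hom s2 s3;
  sdel : Ext E s3 s1;
  sreal : realizes E sdel s2 sf1 sf2 }.

(* raw triples of morphisms *)
Record strihom (X Y : stri) := SHom {
  m1 : hom (s1 X) (s1 Y); m2 : hom (s2 X) (s2 Y); m3 : hom (s3 X) (s3 Y) }.

Definition is_strimor (X Y : stri) (p : strihom X Y) :=
  [/\ comp (m2 p) (sf1 X) = comp (sf1 Y) (m1 p),
      comp (m3 p) (sf2 X) = comp (sf2 Y) (m2 p)
    & push (m1 p) (sdel X) = pull (m3 p) (sdel Y)].

Definition in_R2 (X Y : stri) (p : strihom X Y) :=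
  exists t : hom (s3 X) (s2 Y), m3 p = comp (sf2 Y) t.

Definition stri_id (X : stri) : strihom X X := @SHom X X (idm _) (idm _) (idm _).
Definition stri_comp (X Y Z : stri) (q : strihom Y Z) (p : strihom X Y) : strihom X Z :=
  @SHom X Z (comp (m1 q) (m1 p)) (comp (m2 q) (m2 p)) (comp (m3 q) (m3 p)).
Definition stri_add (X Y : stri) (p q : strihom X Y) : strihom X Y :=
  @SHom X Y (m1 p + m1 q) (m2 p + m2 q) (m3 p + m3 q).
Definition stri_zero (X Y : stri) : strihom X Y := @SHom X Y 0 0 0.
Definition stri_opp (X Y : stri) (p : strihom X Y) : strihom X Y :=
  @SHom X Y (- m1 p) (- m2 p) (- m3 p).
Definition stri_eqR2 (X Y : stri) (p q : strihom X Y) :=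
  in_R2 (stri_add p (stri_opp q)).
End Extriangulated.

(* A category presented by generators: Hom(A,B) is the set of raw arrows f   *)
(* with pmem f, taken modulo the relation peq.  Identity, composition and    *)
(* the additive structure are induced by the raw operations.                 *)
Record precat := PreCat {
  pobj : Type;
  phom : pobj -> pobj -> Type;
  pmem : forall A B, phom A B -> Prop;
  peq : forall A B, phom A B -> phom A B -> Prop;
  pid : forall A, phom A A;
  pcomp : forall A B C, phom B C -> phom A B -> phom A C;
  padd : forall A B, phom A B -> phom A B -> phom A B;
  pzero : forall A B, phom A B;
  popp : forall A B, phom A B -> phom A B }.
Arguments phom {p}.
Arguments pmem {p A B}.
Arguments peq {p A B}.
Arguments pid {p} A.
Arguments pcomp {p A B C}.
Arguments padd {p A B}.
Arguments pzero {p} A B.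
Arguments popp {p A B}.

Section Abelian.
Variable K : precat.

Definition pwell_formed :=
  [/\ [/\ (forall (A B : pobj K) (f : phom A B), peq f f),
          (forall (A B : pobj K) (f g : phom A B), peq f g -> peq g f)
        & (forall (A B : pobj K) (f g h : phom A B), peq f g -> peq g h -> peq f h)],
      [/\ (forall A : pobj K, pmem (pid A)),
          (forall (A B D : pobj K) (g : phom B D) (f : phom A B),
             pmem g -> pmem f -> pmem (pcomp g f)),
          (forall (A B : pobj K) (f g : phom A B), pmem f -> pmem g -> pmem (padd f g)),
          (forall A B : pobj K, pmem (pzero A B))
        & (forall (A B : pobj K) (f : phom A B), pmem f -> pmem (popp f))],
      [/\ (forall (A B D : pobj K) (g g' : phom B D) (f f' : phom A B),
             pmem g -> pmem g' -> pmem f -> pmem f' -> peq g g' -> peq f f' ->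
             peq (pcomp g f) (pcomp g' f')),
          (forall (A B : pobj K) (f f' g g' : phom A B),
             pmem f -> pmem f' -> pmem g -> pmem g' -> peq f f' -> peq g g' ->
             peq (padd f g) (padd f' g'))
        & (forall (A B : pobj K) (f f' : phom A B),
             pmem f -> pmem f' -> peq f f' -> peq (popp f) (popp f'))],
      [/\ (forall (A B D F : pobj K) (h : phom D F) (g : phom B D) (f : phom A B),
             pmem h -> pmem g -> pmem f -> peq (pcomp h (pcomp g f)) (pcomp (pcomp h g) f)),
          (forall (A B : pobj K) (f : phom A B), pmem f -> peq (pcomp (pid B) f) f)
        & (forall (A B : pobj K) (f : phom A B), pmem f -> peq (pcomp f (pid A)) f)]
    &
      [/\ (forall (A B : pobj K) (f g h : phom A B), pmem f -> pmem g -> pmem h ->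
             peq (padd f (padd g h)) (padd (padd f g) h)),
          (forall (A B : pobj K) (f g : phom A B), pmem f -> pmem g ->
             peq (padd f g) (padd g f)),
          (forall (A B : pobj K) (f : phom A B), pmem f -> peq (padd (pzero A B) f) f),
          (forall (A B : pobj K) (f : phom A B), pmem f ->
             peq (padd (popp f) f) (pzero A B))
        & [/\ (forall (A B D : pobj K) (g1 g2 : phom B D) (f : phom A B),
                 pmem g1 -> pmem g2 -> pmem f ->
                 peq (pcomp (padd g1 g2) f) (padd (pcomp g1 f) (pcomp g2 f)))
            & (forall (A B D : pobj K) (g : phom B D) (f1 f2 : phom A B),
                 pmem g -> pmem f1 -> pmem f2 ->
                 peq (pcomp g (padd f1 f2)) (padd (pcomp g f1) (pcomp g f2)))]]].

Definition pzero_object (Z : pobj K) :=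
  forall A : pobj K,
    (forall f g : phom A Z, pmem f -> pmem g -> peq f g) /\
    (forall f g : phom Z A, pmem f -> pmem g -> peq f g).

Definition pbiproduct (A1 A2 S : pobj K) (i1 : phom A1 S) (i2 : phom A2 S)
    (p1 : phom S A1) (p2 : phom S A2) :=
  [/\ pmem i1 /\ pmem i2 /\ pmem p1 /\ pmem p2,
      peq (pcomp p1 i1) (pid A1) /\ peq (pcomp p2 i2) (pid A2),
      peq (pcomp p1 i2) (pzero A2 A1), peq (pcomp p2 i1) (pzero A1 A2)
    & peq (padd (pcomp i1 p1) (pcomp i2 p2)) (pid S)].

Definition pkernel (A B K0 : pobj K) (f : phom A B) (k : phom K0 A) :=
  [/\ pmem k, peq (pcomp f k) (pzero K0 B)
    & forall (X : pobj K) (g : phom X A), pmem g -> peq (pcomp f g) (pzero X B) ->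
        exists u : phom X K0, [/\ pmem u, peq (pcomp k u) g
          & forall u' : phom X K0, pmem u' -> peq (pcomp k u') g -> peq u' u]].

Definition pcokernel (A B Q : pobj K) (f : phom A B) (q : phom B Q) :=
  [/\ pmem q, peq (pcomp q f) (pzero A Q)
    & forall (X : pobj K) (g : phom B X), pmem g -> peq (pcomp g f) (pzero A X) ->
        exists u : phom Q X, [/\ pmem u, peq (pcomp u q) g
          & forall u' : phom Q X, pmem u' -> peq (pcomp u' q) g -> peq u' u]].

Definition pmono (A B : pobj K) (m : phom A B) :=
  forall (X : pobj K) (g h : phom X A), pmem g -> pmem h ->
    peq (pcomp m g) (pcomp m h) -> peq g h.

Definition pepi (A B : pobj K) (e : phom A B) :=
  forall (X : pobj K) (g h : phom B X), pmem g -> pmem h ->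
    peq (pcomp g e) (pcomp h e) -> peq g h.

Definition is_abelian :=
  [/\ pwell_formed,
      exists Z, pzero_object Z,
      [/\ (forall A1 A2 : pobj K, exists (S : pobj K) (i1 : phom A1 S) (i2 : phom A2 S)
         (p1 : phom S A1) (p2 : phom S A2), pbiproduct i1 i2 p1 p2),
      (forall (A B : pobj K) (f : phom A B), pmem f ->
         exists (K0 : pobj K) (k : phom K0 A), pkernel f k)
       & (forall (A B : pobj K) (f : phom A B), pmem f ->
         exists (Q : pobj K) (q : phom B Q), pcokernel f q)],
      (forall (A B : pobj K) (m : phom A B), pmem m -> pmono m ->
         exists (Q : pobj K) (f : phom B Q), pmem f /\ pkernel f m)
    & (forall (A B : pobj K) (e : phom A B), pmem e -> pepi e ->
         exists (P : pobj K) (f : phom P A), pmem f /\ pcokernel f e)].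
End Abelian.

Definition stri_quot (C : preadd) (E : ext_data C) : precat :=
  @PreCat (stri E) (@strihom C E) (@is_strimor C E) (@stri_eqR2 C E)
    (@stri_id C E) (@stri_comp C E) (@stri_add C E) (@stri_zero C E) (@stri_opp C E).

(* Main.v *)
Require Import Defs.
From mathcomp Require Import all_boot all_algebra.
Require Import Defs.
Set Implicit Arguments. Unset Strict Implicit. Unset Printing Implicit Defensive.
Import GRing.Theory.
Local Open Scope ring_scope.

Section Pf.
Variables (C : preadd) (E : ext_data C).
Hypothesis HE : extriangulated E.

Lemma compA (A B D F : obj C) (h : hom D F) (g : hom B D) (f : hom A B) :
  comp h (comp g f) = comp (comp h g) f.
Proof. by case: HE => [[[H _ _ _ _] _ _] _ _ _ _]; apply: H. Qed.
Lemma comp1l (A B : obj C) (f : hom A B) : comp (idm B) f = f.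
Proof. by case: HE => [[[_ H _ _ _] _ _] _ _ _ _]; apply: H. Qed.
Lemma comp1r (A B : obj C) (f : hom A B) : comp f (idm A) = f.
Proof. by case: HE => [[[_ _ H _ _] _ _] _ _ _ _]; apply: H. Qed.
Lemma compDl (A B D : obj C) (g1 g2 : hom B D) (f : hom A B) :
  comp (g1 + g2) f = comp g1 f + comp g2 f.
Proof. by case: HE => [[[_ _ _ H _] _ _] _ _ _ _]; apply: H. Qed.
Lemma compDr (A B D : obj C) (g : hom B D) (f1 f2 : hom A B) :
  comp g (f1 + f2) = comp g f1 + comp g f2.
Proof. by case: HE => [[[_ _ _ _ H] _ _] _ _ _ _]; apply: H. Qed.

Lemma idem0 (V : zmodType) (x : V) : x = x + x -> x = 0.
Proof. by move=> h; apply/(addrI x); rewrite addr0 -h. Qed.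

Lemma comp0l (A B D : obj C) (f : hom A B) : comp (0 : hom B D) f = 0.
Proof. by apply: idem0; rewrite -compDl addr0. Qed.
Lemma comp0r (A B D : obj C) (g : hom B D) : comp g (0 : hom A B) = 0.
Proof. by apply: idem0; rewrite -compDr addr0. Qed.
Lemma compNl (A B D : obj C) (g : hom B D) (f : hom A B) : comp (- g) f = - comp g f.
Proof. by apply/eqP; rewrite -subr_eq0 opprK -compDl addNr comp0l. Qed.
Lemma compNr (A B D : obj C) (g : hom B D) (f : hom A B) : comp g (- f) = - comp g f.
Proof. by apply/eqP; rewrite -subr_eq0 opprK -compDr addNr comp0r. Qed.
Lemma compBl (A B D : obj C) (g1 g2 : hom B D) (f : hom A B) :
  comp (g1 - g2) f = comp g1 f - comp g2 f.
Proof. by rewrite compDl compNl. Qed.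
Lemma compBr (A B D : obj C) (g : hom B D) (f1 f2 : hom A B) :
  comp g (f1 - f2) = comp g f1 - comp g f2.
Proof. by rewrite compDr compNr. Qed.

Lemma zero_ex : exists Z : obj C, is_zero_object Z.
Proof. by case: HE => [[_ H _] _ _ _ _]. Qed.
Lemma biprod_ex (A1 A2 : obj C) : exists (S : obj C) (i1 : hom A1 S) (i2 : hom A2 S)
        (p1 : hom S A1) (p2 : hom S A2), is_biproduct i1 i2 p1 p2.
Proof. by case: HE => [[_ _ H] _ _ _ _]. Qed.

Lemma Emap1 (X A : obj C) (d : Ext E X A) : Emap E (idm X) (idm A) d = d.
Proof. by case: HE => [_ [H _ _ _ _] _ _ _]; apply: H. Qed.
Lemma EmapM (X X' X'' A A' A'' : obj C) (c : hom X' X) (c' : hom X'' X')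
          (a : hom A A') (a' : hom A' A'') (d : Ext E X A) :
         Emap E (comp c c') (comp a' a) d = Emap E c' a' (Emap E c a d).
Proof. by case: HE => [_ [_ H _ _ _] _ _ _]; apply: H. Qed.
Lemma EmapD (X X' A A' : obj C) (c : hom X' X) (a : hom A A') (d1 d2 : Ext E X A) :
         Emap E c a (d1 + d2) = Emap E c a d1 + Emap E c a d2.
Proof. by case: HE => [_ [_ _ H _ _] _ _ _]; apply: H. Qed.
Lemma pullDm (X X' A : obj C) (c1 c2 : hom X' X) (d : Ext E X A) :
         pull (c1 + c2) d = pull c1 d + pull c2 d.
Proof. by case: HE => [_ [_ _ _ H _] _ _ _]; apply: H. Qed.
Lemma pushDm (X A A' : obj C) (a1 a2 : hom A A') (d : Ext E X A) :
         push (a1 + a2) d = push a1 d + push a2 d.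
Proof. by case: HE => [_ [_ _ _ _ H] _ _ _]; apply: H. Qed.

Lemma real_ex (A X : obj C) (d : Ext E X A) :
  exists (B : obj C) (x : hom A B) (y : hom B X), realizes E d B x y.
Proof. by case: HE => [_ _ [H _] _ _]; case: (H _ _ d). Qed.
Lemma real_cond : realization_condition E.
Proof. by case: HE => [_ _ [_ [H _]] _ _]. Qed.
Lemma split0 (A X S : obj C) (iA : hom A S) (iX : hom X S) (pA : hom S A) (pX : hom S X) :
     is_biproduct iA iX pA pX -> realizes E (0 : Ext E X A) S iA pX.
Proof. by case: HE => [_ _ [_ [_ [H _]]] _ _]; apply: H. Qed.
Lemma et3 : ET3 E.
Proof. by case: HE => [_ _ _ [H _] _]. Qed.
Lemma et3op : ET3op E.
Proof. by case: HE => [_ _ _ [_ H] _]. Qed.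

Lemma push_id (X A : obj C) (d : Ext E X A) : push (idm A) d = d.
Proof. exact: Emap1. Qed.
Lemma pull_id (X A : obj C) (d : Ext E X A) : pull (idm X) d = d.
Proof. exact: Emap1. Qed.
Lemma pushD (X A A' : obj C) (a : hom A A') (d1 d2 : Ext E X A) :
  push a (d1 + d2) = push a d1 + push a d2.
Proof. exact: EmapD. Qed.
Lemma pullD (X X' A : obj C) (c : hom X' X) (d1 d2 : Ext E X A) :
  pull c (d1 + d2) = pull c d1 + pull c d2.
Proof. exact: EmapD. Qed.
Lemma push_a0 (X A A' : obj C) (a : hom A A') : push a (0 : Ext E X A) = 0.
Proof. by apply: idem0; rewrite -pushD addr0. Qed.
Lemma pull_c0 (X X' A : obj C) (c : hom X' X) : pull c (0 : Ext E X A) = 0.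
Proof. by apply: idem0; rewrite -pullD addr0. Qed.
Lemma push0 (X A A' : obj C) (d : Ext E X A) : push (0 : hom A A') d = 0.
Proof. by apply: idem0; rewrite -pushDm addr0. Qed.
Lemma pull0 (X X' A : obj C) (d : Ext E X A) : pull (0 : hom X' X) d = 0.
Proof. by apply: idem0; rewrite -pullDm addr0. Qed.
Lemma pushN (X A A' : obj C) (a : hom A A') (d : Ext E X A) : push (- a) d = - push a d.
Proof. by apply/eqP; rewrite -subr_eq0 opprK -pushDm addNr push0. Qed.
Lemma pullN (X X' A : obj C) (c : hom X' X) (d : Ext E X A) : pull (- c) d = - pull c d.
Proof. by apply/eqP; rewrite -subr_eq0 opprK -pullDm addNr pull0. Qed.
Lemma pushB (X A A' : obj C) (a1 a2 : hom A A') (d : Ext E X A) :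
  push (a1 - a2) d = push a1 d - push a2 d.
Proof. by rewrite pushDm pushN. Qed.
Lemma pullB (X X' A : obj C) (c1 c2 : hom X' X) (d : Ext E X A) :
  pull (c1 - c2) d = pull c1 d - pull c2 d.
Proof. by rewrite pullDm pullN. Qed.
Lemma pushM (X A A' A'' : obj C) (a : hom A A') (a' : hom A' A'') (d : Ext E X A) :
  push (comp a' a) d = push a' (push a d).
Proof. by rewrite /push -EmapM comp1l. Qed.
Lemma pullM (X X' X'' A : obj C) (c : hom X' X) (c' : hom X'' X') (d : Ext E X A) :
  pull (comp c c') d = pull c' (pull c d).
Proof. by rewrite /pull -EmapM comp1l. Qed.
Lemma push_pull (X X' A A' : obj C) (c : hom X' X) (a : hom A A') (d : Ext E X A) :
  push a (pull c d) = pull c (push a d).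
Proof.
have -> : push a (pull c d) = Emap E c a d by rewrite /push /pull -EmapM !comp1r.
by rewrite /push /pull -EmapM !comp1l.
Qed.

Lemma zero_eq (Z : obj C) (HZ : is_zero_object Z) (A : obj C) (f g : hom A Z) : f = g.
Proof. by case: (HZ A) => H _; apply: H. Qed.
Lemma zero_eq' (Z : obj C) (HZ : is_zero_object Z) (A : obj C) (f g : hom Z A) : f = g.
Proof. by case: (HZ A) => _ H; apply: H. Qed.

Lemma R1 (A X B : obj C) (d : Ext E X A) (x : hom A B) (y : hom B X) :
  realizes E d B x y -> pull y d = 0.
Proof.
move=> Hd; have [Z HZ] := zero_ex.
have Hs : realizes E (0 : Ext E B Z) B 0 (idm B).
  apply: (@split0 Z B B 0 (idm B) 0 (idm B)); split.
  - exact: zero_eq'.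
  - exact: comp1l.
  - exact: comp0l.
  - exact: comp0r.
  by rewrite comp0l add0r comp1l.
have [a [_ Ha]] := et3op Hs Hd (erefl (comp y (idm B))).
by rewrite -Ha push_a0.
Qed.

Lemma R2 (A X B : obj C) (d : Ext E X A) (x : hom A B) (y : hom B X) :
  realizes E d B x y -> push x d = 0.
Proof.
move=> Hd; have [Z HZ] := zero_ex.
have Hs : realizes E (0 : Ext E Z B) B (idm B) 0.
  apply: (@split0 B Z B (idm B) 0 (idm B) 0); split.
  - exact: comp1l.
  - exact: zero_eq'.
  - exact: comp0r.
  - exact: comp0l.
  by rewrite comp0l addr0 comp1l.
have [c [_ Hc]] := et3 (a := x) (b := idm B) Hd Hs (erefl (comp (idm B) x)).
by rewrite Hc pull_c0.
Qed.

Lemma R3 (A X B W : obj C) (d : Ext E X A) (x : hom A B) (y : hom B X) (w : hom W X) :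
  realizes E d B x y -> pull w d = 0 -> exists t : hom W B, w = comp y t.
Proof.
move=> Hd Hw; have [S [iA [iW [pA [pW Hb]]]]] := biprod_ex A W.
have Hs := split0 Hb.
have [|b [_ Hb2]] := real_cond (a := idm A) (c := w) Hs Hd.
  by rewrite Hw push_a0.
exists (comp b iW); rewrite compA Hb2 -compA.
by case: Hb => _ -> _ _ _; rewrite comp1r.
Qed.

Lemma R4 (A X B A' : obj C) (d : Ext E X A) (x : hom A B) (y : hom B X) (a : hom A A') :
  realizes E d B x y -> push a d = 0 -> exists s : hom B A', a = comp s x.
Proof.
move=> Hd Ha; have [S [iA [iX [pA [pX Hb]]]]] := biprod_ex A' X.
have Hs := split0 Hb.
have [|b [Hb1 _]] := real_cond (a := a) (c := idm X) Hd Hs.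
  by rewrite Ha pull_c0.
exists (comp pA b); rewrite -compA Hb1 compA.
by case: Hb => -> _ _ _ _; rewrite comp1l.
Qed.

Lemma R5 (A X B W : obj C) (d : Ext E X A) (x : hom A B) (y : hom B X) (th : Ext E W A) :
  realizes E d B x y -> push x th = 0 -> exists w : hom W X, th = pull w d.
Proof.
move=> Hd Ht; have [V [u [v Hv]]] := real_ex th.
have [S [iB [iW [pB [pW Hb]]]]] := biprod_ex B W.
have Hs := split0 Hb.
have [|b [Hb1 _]] := real_cond (a := x) (c := idm W) Hv Hs.
  by rewrite Ht pull_c0.
have Hg : comp (comp pB b) u = comp x (idm A).
  by rewrite -compA Hb1 compA; case: Hb => -> _ _ _ _; rewrite comp1l comp1r.
have [c [_ Hc]] := et3 Hv Hd Hg.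
by exists c; rewrite -Hc push_id.
Qed.

Lemma R6 (A X B A' : obj C) (d : Ext E X A) (x : hom A B) (y : hom B X) (th : Ext E X A') :
  realizes E d B x y -> pull y th = 0 -> exists a : hom A A', th = push a d.
Proof.
move=> Hd Ht; have [V [u [v Hv]]] := real_ex th.
have [S [iA [iB [pA [pB Hb]]]]] := biprod_ex A' B.
have Hs := split0 Hb.
have [|b [_ Hb2]] := real_cond (a := idm A') (c := y) Hs Hv.
  by rewrite Ht push_a0.
have Hg : comp v (comp b iB) = comp (idm X) y.
  by rewrite compA Hb2 -compA; case: Hb => _ -> _ _ _; rewrite comp1l comp1r.
have [a [_ Ha]] := et3op Hd Hv Hg.
by exists a; rewrite Ha pull_id.
Qed.

Lemma peqP (X Y : stri E) (p q : strihom X Y) :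
  stri_eqR2 p q <-> pull (m3 p) (sdel Y) = pull (m3 q) (sdel Y).
Proof.
split.
  move=> [t /= Ht]; apply/eqP; rewrite -subr_eq0 -pullB Ht pullM.
  by rewrite (R1 (sreal Y)) pull_c0.
move=> H; have [|t Ht] := R3 (w := m3 p - m3 q) (sreal Y).
  by rewrite pullB H subrr.
by exists t.
Qed.

Lemma peq_m3 (X Y : stri E) (p q : strihom X Y) : m3 p = m3 q -> stri_eqR2 p q.
Proof. by move=> H; apply/peqP; rewrite H. Qed.

Lemma smor_val (X Y : stri E) (p : strihom X Y) : is_strimor p ->
  push (m1 p) (sdel X) = pull (m3 p) (sdel Y).
Proof. by case. Qed.

Lemma peqP1 (X Y : stri E) (p q : strihom X Y) : is_strimor p -> is_strimor q ->
  stri_eqR2 p q <-> push (m1 p) (sdel X) = push (m1 q) (sdel X).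
Proof.
move=> Hp Hq; rewrite (smor_val Hp) (smor_val Hq); exact: peqP.
Qed.

Lemma mk (X Y : stri E) (a : hom (s1 X) (s1 Y)) (c : hom (s3 X) (s3 Y)) :
  push a (sdel X) = pull c (sdel Y) ->
  exists p : strihom X Y, [/\ is_strimor p, m1 p = a & m3 p = c].
Proof.
move=> H; have [b [Hb1 Hb2]] := real_cond (sreal X) (sreal Y) H.
by exists (SHom a b c); split.
Qed.

Lemma smor_id (X : stri E) : is_strimor (stri_id X).
Proof. by split => /=; rewrite ?comp1l ?comp1r ?push_id ?pull_id. Qed.
Lemma smor_comp (X Y Z : stri E) (q : strihom Y Z) (p : strihom X Y) :
  is_strimor q -> is_strimor p -> is_strimor (stri_comp q p).
Proof.
case=> Hq1 Hq2 Hq3 [Hp1 Hp2 Hp3]; split => /=.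
- by rewrite -compA Hp1 compA Hq1 -compA.
- by rewrite -compA Hp2 compA Hq2 -compA.
- by rewrite pushM Hp3 push_pull Hq3 -pullM.
Qed.
Lemma smor_add (X Y : stri E) (p q : strihom X Y) :
  is_strimor p -> is_strimor q -> is_strimor (stri_add p q).
Proof.
case=> Hp1 Hp2 Hp3 [Hq1 Hq2 Hq3]; split => /=.
- by rewrite compDl compDr Hp1 Hq1.
- by rewrite compDl compDr Hp2 Hq2.
- by rewrite pushDm pullDm Hp3 Hq3.
Qed.
Lemma smor_zero (X Y : stri E) : is_strimor (stri_zero X Y).
Proof. by split => /=; rewrite ?comp0l ?comp0r ?push0 ?pull0. Qed.
Lemma smor_opp (X Y : stri E) (p : strihom X Y) :
  is_strimor p -> is_strimor (stri_opp p).
Proof.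
case=> Hp1 Hp2 Hp3; split => /=.
- by rewrite compNl compNr Hp1.
- by rewrite compNl compNr Hp2.
- by rewrite pushN pullN Hp3.
Qed.

Lemma wf : pwell_formed (stri_quot E).
Proof.
split.
- split => /=.
  + by move=> X Y f; apply: peq_m3.
  + by move=> X Y f g /peqP H; apply/peqP.
  + by move=> X Y f g h /peqP H1 /peqP H2; apply/peqP; rewrite H1.
- split => /=.
  + exact: smor_id.
  + by move=> X Y Z g f; apply: smor_comp.
  + by move=> X Y f g; apply: smor_add.
  + by move=> X Y; apply: smor_zero.
  + by move=> X Y f; apply: smor_opp.
- split => /=.
  + move=> X Y Z g g' f f' Hg Hg' Hf Hf' /peqP H1 /peqP H2; apply/peqP => /=.
    by rewrite !pullM -H1 -(smor_val Hg) -!push_pull H2.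
  + move=> X Y f f' g g' _ _ _ _ /peqP H1 /peqP H2; apply/peqP => /=.
    by rewrite !pullDm H1 H2.
  + move=> X Y f f' _ _ /peqP H; apply/peqP => /=.
    by rewrite !pullN H.
- split => /=.
  + by move=> *; apply: peq_m3 => /=; rewrite compA.
  + by move=> *; apply: peq_m3 => /=; rewrite comp1l.
  + by move=> *; apply: peq_m3 => /=; rewrite comp1r.
- split => /=.
  + by move=> *; apply: peq_m3 => /=; rewrite addrA.
  + by move=> *; apply: peq_m3 => /=; rewrite addrC.
  + by move=> *; apply: peq_m3 => /=; rewrite add0r.
  + by move=> *; apply: peq_m3 => /=; rewrite addNr.
  + split.
    * by move=> *; apply: peq_m3 => /=; rewrite compDl.
    * by move=> *; apply: peq_m3 => /=; rewrite compDr.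
Qed.

Lemma zobj : exists Z : stri E, pzero_object (K := stri_quot E) Z.
Proof.
have [Z HZ] := zero_ex; have [B [x [y Hr]]] := real_ex (0 : Ext E Z Z).
exists (STri Hr) => A; split => f g _ _ /=; apply: peq_m3.
- exact: zero_eq HZ _ _ _.
- exact: zero_eq' HZ _ _ _.
Qed.

Lemma biprodQ (X1 X2 : stri E) : exists (S : stri E) (i1 : strihom X1 S) (i2 : strihom X2 S)
  (p1 : strihom S X1) (p2 : strihom S X2), pbiproduct (K := stri_quot E) i1 i2 p1 p2.
Proof.
have [SA [iA1 [iA2 [pA1 [pA2 HA]]]]] := biprod_ex (s1 X1) (s1 X2).
have [SC [iC1 [iC2 [pC1 [pC2 HC]]]]] := biprod_ex (s3 X1) (s3 X2).
set dS := push iA1 (pull pC1 (sdel X1)) + push iA2 (pull pC2 (sdel X2)).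
have [B [x [y Hr]]] := real_ex dS.
case: HA => HA1 HA2 HA3 HA4 HA5; case: HC => HC1 HC2 HC3 HC4 HC5.
have [|i1 [Hi1 Ei1 Fi1]] := @mk X1 (STri Hr) iA1 iC1.
  by rewrite /= /dS pullD -!push_pull -!pullM HC1 HC4 pull0 push_a0 addr0 pull_id.
have [|i2 [Hi2 Ei2 Fi2]] := @mk X2 (STri Hr) iA2 iC2.
  by rewrite /= /dS pullD -!push_pull -!pullM HC2 HC3 pull0 push_a0 add0r pull_id.
have [|p1 [Hp1 Ep1 Fp1]] := @mk (STri Hr) X1 pA1 pC1.
  by rewrite /= /dS pushD -!pushM HA1 HA3 push0 addr0 push_id.
have [|p2 [Hp2 Ep2 Fp2]] := @mk (STri Hr) X2 pA2 pC2.
  by rewrite /= /dS pushD -!pushM HA2 HA4 push0 add0r push_id.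
exists (STri Hr), i1, i2, p1, p2; split => //=.
- by split; apply: peq_m3; rewrite /= ?Fi1 ?Fp1 ?Fi2 ?Fp2.
- by apply: peq_m3; rewrite /= Fi2 Fp1.
- by apply: peq_m3; rewrite /= Fi1 Fp2.
- by apply: peq_m3; rewrite /= Fi1 Fp1 Fi2 Fp2.
Qed.

Lemma kerQ (X Y : stri E) (f : strihom X Y) : is_strimor f ->
  exists (K0 : stri E) (k : strihom K0 X), pkernel (K := stri_quot E) f k.
Proof.
move=> Hf; have [M [e [p Hep]]] := real_ex (pull (m3 f) (sdel Y)).
have [BK [xk [yk Hk]]] := real_ex (pull p (sdel X)).
have [k [Hk1 Ek Fk]] := @mk (STri Hk) X (idm _) p (push_id _).
exists (STri Hk), k; split => //=.
- by apply/peqP; rewrite /= Fk pullM pull0 (R1 Hep).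
move=> T g Hg /peqP /= H; rewrite pullM pull0 in H.
have [s Hs] := R3 Hep H.
have [|u [Hu Eu Fu]] := @mk T (STri Hk) (m1 g) s.
  by rewrite /= -pullM -Hs (smor_val Hg).
exists u; split => //.
- by apply: peq_m3; rewrite /= Fk Fu Hs.
move=> u' Hu' H'.
have /(peqP1 (smor_comp Hk1 Hu') Hg) /= := H'.
rewrite Ek comp1l => H2; apply/(peqP1 Hu' Hu).
by rewrite H2 Eu.
Qed.

Lemma cokerQ (X Y : stri E) (f : strihom X Y) : is_strimor f ->
  exists (Q : stri E) (q : strihom Y Q), pcokernel (K := stri_quot E) f q.
Proof.
move=> Hf; have [M [e [p Hep]]] := real_ex (pull (m3 f) (sdel Y)).
have [BZ [xz [yz Hz]]] := real_ex (push e (sdel Y)).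
have [q [Hq Eq Fq]] := @mk Y (STri Hz) e (idm _) (esym (pull_id _)).
exists (STri Hz), q; split => //=.
- apply/(peqP1 (smor_comp Hq Hf) (smor_zero _ _)) => /=.
  by rewrite Eq pushM (smor_val Hf) (R2 Hep) push0.
move=> T g Hg /(peqP1 (smor_comp Hg Hf) (smor_zero _ _)) /= H.
rewrite pushM (smor_val Hf) push0 in H.
have [s Hs] := R4 Hep H.
have [|u [Hu Eu Fu]] := @mk (STri Hz) T s (m3 g).
  by rewrite /= -pushM -Hs (smor_val Hg).
exists u; split => //.
- by apply: peq_m3; rewrite /= Fq Fu comp1r.
move=> u' Hu' /peqP /= H'; apply/peqP.
by rewrite Fq comp1r in H'; rewrite H' Fu.
Qed.

Lemma monoQ (X Y : stri E) (f : strihom X Y) : is_strimor f -> pmono (K := stri_quot E) f ->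
  exists (Q : stri E) (f0 : strihom Y Q), is_strimor f0 /\ pkernel (K := stri_quot E) f0 f.
Proof.
move=> Hf Hmono; have [M [e [p Hep]]] := real_ex (pull (m3 f) (sdel Y)).
have [BZ [xz [yz Hz]]] := real_ex (push e (sdel Y)).
have [q [Hq Eq Fq]] := @mk Y (STri Hz) e (idm _) (esym (pull_id _)).
exists (STri Hz), q; split => //; split => //=.
- apply/(peqP1 (smor_comp Hq Hf) (smor_zero _ _)) => /=.
  by rewrite Eq pushM (smor_val Hf) (R2 Hep) push0.
move=> T g Hg /(peqP1 (smor_comp Hq Hg) (smor_zero _ _)) /= H.
rewrite Eq pushM (smor_val Hg) push0 in H.
have [v Hv] := R5 Hep H.
set th := pull (comp v (sf2 T)) (sdel X).
have Hth : push (m1 f) th = 0.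
  rewrite /th push_pull (smor_val Hf) pullM -Hv -(smor_val Hg) -push_pull.
  by rewrite (R1 (sreal T)) push_a0.
have [BR [xr [yr Hrr]]] := real_ex th.
have [h [Hh Eh Fh]] := @mk (STri Hrr) X (idm _) (comp v (sf2 T)) (push_id _).
have Hm := Hmono (STri Hrr) h (stri_zero _ _) Hh (smor_zero _ _).
have /(peqP1 Hh (smor_zero _ _)) /= : stri_eqR2 h (stri_zero (STri Hrr) X).
  apply: Hm; apply/(peqP1 (smor_comp Hf Hh) (smor_comp Hf (smor_zero _ _))) => /=.
  by rewrite Eh comp1r comp0r push0 Hth.
rewrite Eh push_id push0 /th pullM => H0.
have [au Hau] := R6 (sreal T) H0.
have [u [Hu Eu Fu]] := @mk T X au v (esym Hau).
have Hfu : stri_eqR2 (stri_comp f u) g.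
  by apply/peqP; rewrite /= Fu pullM -Hv.
exists u; split => //.
move=> u' Hu' H'; apply: (Hmono T u' u Hu' Hu).
by apply/peqP; move/peqP: H' => ->; move/peqP: Hfu => ->.
Qed.

Lemma epiQ (X Y : stri E) (f : strihom X Y) : is_strimor f -> pepi (K := stri_quot E) f ->
  exists (P : stri E) (k : strihom P X), is_strimor k /\ pcokernel (K := stri_quot E) k f.
Proof.
move=> Hf Hepi; have [M [e [p Hep]]] := real_ex (pull (m3 f) (sdel Y)).
have [BZ [xz [yz Hz]]] := real_ex (push e (sdel Y)).
have [q [Hq Eq Fq]] := @mk Y (STri Hz) e (idm _) (esym (pull_id _)).
have [BK [xk [yk Hk]]] := real_ex (pull p (sdel X)).
have [k [Hk1 Ek Fk]] := @mk (STri Hk) X (idm _) p (push_id _).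
have /(peqP1 Hq (smor_zero _ _)) /= : stri_eqR2 q (stri_zero Y (STri Hz)).
  apply: (Hepi _ q _ Hq (smor_zero _ _)).
  apply/(peqP1 (smor_comp Hq Hf) (smor_comp (smor_zero _ _) Hf)) => /=.
  by rewrite Eq comp0l push0 pushM (smor_val Hf) (R2 Hep).
rewrite Eq push0 => H0; have [v Hv] := R5 Hep H0.
exists (STri Hk), k; split => //; split => //=.
- by apply/peqP; rewrite /= Fk pullM pull0 (R1 Hep).
move=> T g Hg /(peqP1 (smor_comp Hg Hk1) (smor_zero _ _)) /= H.
rewrite Ek comp1r push0 in H.
have Hg0 : forall (W : obj C) (s : hom W M), pull (comp (m3 g) (comp p s)) (sdel T) = 0.
  by move=> W s; rewrite !pullM -(smor_val Hg) -push_pull H pull_c0.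
have [|s Hs] := R3 (w := comp v (sf2 Y)) Hep.
  by rewrite pullM -Hv (R1 (sreal Y)).
have [|au Hau] := R6 (th := pull (comp (m3 g) v) (sdel T)) (sreal Y).
  by rewrite -pullM -compA Hs Hg0.
have [u [Hu Eu Fu]] := @mk Y T au (comp (m3 g) v) (esym Hau).
have [|s' Hs'] := R3 (w := comp v (m3 f) - idm _) Hep.
  by rewrite pullB pullM -Hv pull_id subrr.
have Hvc : comp v (m3 f) = comp p s' + idm _ by rewrite -Hs' subrK.
have Hfu : stri_eqR2 (stri_comp u f) g.
  by apply/peqP; rewrite /= Fu -compA Hvc compDr pullDm Hg0 add0r comp1r.
exists u; split => //.
move=> u' Hu' H'; apply: (Hepi T u' u Hu' Hu).
by apply/peqP; move/peqP: H' => ->; move/peqP: Hfu => ->.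
Qed.
End Pf.

Theorem proposition4p3 (C : preadd) (E : ext_data C) :
  extriangulated E -> is_abelian (stri_quot E).
Proof.
move=> HE; split.
- exact: wf HE.
- exact: zobj HE.
- split.
  + by move=> A1 A2; apply: biprodQ HE A1 A2.
  + by move=> A B f Hf; apply: kerQ HE _ _ f Hf.
  + by move=> A B f Hf; apply: cokerQ HE _ _ f Hf.
- by move=> A B m Hm Hmono; apply: monoQ HE _ _ m Hm Hmono.
- by move=> A B e He Hepi; apply: epiQ HE _ _ e He Hepi.
Qed.
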